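(* Let $\mathcal{T}=(\mathcal{V},\mathcal{E})$ obey the LC-PF model and covariance assumption of the context, with $\Omega_p(c,c)+\Omega_q(c,c)>0$ for every non-root node $c$. Let $\mathcal{M}$ be a set of missing non-root nodes such that every missing node has degree greater than $2$ and any two missing nodes are at distance greater than two (in hops) in $\mathcal{T}$. Let $\mathcal{O}=\mathcal{V}\setminus\mathcal{M}$, and let $\mathcal{T}_{\mathcal{M}}$ be the minimum weight spanning tree of the complete graph on $\mathcal{O}$ with edge weights $\phi$. Let $b\in\mathcal{M}$ have (observed) parent $a$ and (observed) set of children $\mathcal{C}_b$. Let $c^*\in\arg\min_{c_i\in\mathcal{C}_b}\phi_{bc_i}$. Then: (i) no edge $(c_ic_j)$ with $c_i,c_j\in\mathcal{C}_b\setminus\{c^*\}$ exists in $\mathcal{T}_{\mathcal{M}}$; (ii) with $\mathcal{C}_b^1=\{c_i\in\mathcal{C}_b:\phi_{ac_i}<\phi_{c^*c_i}\}$, each node of $\mathcal{C}_b^1$ is connected to $a$ in $\mathcal{T}_{\mathcal{M}}$, and each node of $\mathcal{C}_b\setminus(\mathcal{C}_b^1\cup\{c^*\})$ is connected to $c^*$ in $\mathcal{T}_{\mathcal{M}}$.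
   Context: $\mathcal{T}=(\mathcal{V},\mathcal{E})$ is a tree with a distinguished root (substation) of degree one. Each edge $(ab)$ has resistance $r_{ab}>0$ and reactance $x_{ab}>0$. For a node $a$, $\mathcal{P}^a$ is the set of edges on the path from $a$ to the root. If $\mathcal{P}^b\subseteq\mathcal{P}^a$ and $(ab)\in\mathcal{E}$, then $b$ is the parent of $a$ and $a$ is a child of $b$. Let $H_{1/r},H_{1/x}$ be the weighted Laplacians with edge weights $1/r_{ab}$, $1/x_{ab}$, with the root row and column removed. Non-root nodes have random injections $p_a,q_a$. The LC-PF model gives $v=H_{1/r}^{-1}p+H_{1/x}^{-1}q$ and $\theta=H_{1/x}^{-1}p-H_{1/r}^{-1}q$; the root voltage is constant. Covariance assumption: $\Omega_p,\Omega_q$ are the covariances of $p,q$, and $\Omega_{pq}=\mathbb{E}[(p-\mathbb{E}p)(q-\mathbb{E}q)^T]=\Omega_{qp}^T$. For distinct non-root $a,b$, $\Omega_p(a,b)=\Omega_q(a,b)=\Omega_{qp}(a,b)=0$, and $\Omega_{qp}(a,a)\ge0$. Define $\phi_{ab}=\mathbb{E}[((v_a-\mathbb{E}v_a)-(v_b-\mathbb{E}v_b))^2]$. *)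

(* Defs.v *)
From HB Require Import structures.
From mathcomp Require Import all_boot all_order all_algebra.
From mathcomp Require Import boolp classical_sets reals ereal measure.
From mathcomp Require Import lebesgue_integral hoelder random_variable.

Set Implicit Arguments.
Unset Strict Implicit.
Unset Printing Implicit Defensive.

Import Order.TTheory GRing.Theory Num.Theory.
Local Open Scope ring_scope.

(* Nodes of the tree are 'I_n.+1; the root (substation) is ord0 and the
   non-root nodes are indexed by 'I_n through  lift ord0 : 'I_n -> 'I_n.+1. *)

Section Graphs.
Variable V : finType.

Fixpoint hopball (e : rel V) (k : nat) (x : V) : {set V} :=
  if k is k'.+1 then hopball e k' x :|: [set z | [exists y in hopball e k' x, e y z]]
  else [set x].

Definition hopdist (e : rel V) (x y : V) : nat :=
  find (fun k => y \in hopball e k x) (iota 0 #|V|.+1).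

Definition deg (e : rel V) (x : V) : nat := #|[set y | e x y]|.

(* [is_tree_on S T] : the simple undirected graph with (symmetric) edge
   relation T is a tree with vertex set S: every edge joins two distinct
   vertices of S, the graph is connected on S, and it has #|S| - 1 edges
   (each undirected edge is counted twice as an ordered pair). *)
Definition is_tree_on (S : {set V}) (T : rel V) : Prop :=
  [/\ symmetric T, irreflexive T,
      (forall x y, T x y -> (x \in S) && (y \in S)),
      (forall x y, x \in S -> y \in S -> connect T x y) &
      #|[set u : V * V | T u.1 u.2]| = (#|S| - 1).*2 ]%N.

End Graphs.

Section Tree.
Variable n : nat.
Local Notation V := 'I_n.+1.
Definition substation : V := ord0.
End Tree.
Arguments substation {n}.
Section Tree2.
Variable n : nat.
Local Notation V := 'I_n.+1.

(* parent / children w.r.t. the substation: b is the parent of a iff (ab) is an edge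
   and b is closer to the substation, i.e. P^b is included in P^a. *)
Definition is_parent (e : rel V) (b a : V) : bool :=
  e a b && (hopdist e b substation < hopdist e a substation)%N.

Definition children (e : rel V) (b : V) : {set V} :=
  [set c | is_parent e b c].

(* weighted Laplacian with edge weights w, substation row and column removed *)
Definition redLap (R : ringType) (e : rel V) (w : V -> V -> R) : matrix R n n :=
  \matrix_(i, j)
    (if i == j then \sum_(k : V | e (lift ord0 i) k) w (lift ord0 i) k
     else if e (lift ord0 i) (lift ord0 j) then - w (lift ord0 i) (lift ord0 j)
     else 0).
End Tree2.

Section LCPF.
Context {d : measure_display} {Tm : measurableType d} {R : realType}.
Variable (P : probability Tm R) (n : nat).
Variables (e : rel 'I_n.+1) (r x : 'I_n.+1 -> 'I_n.+1 -> R).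
Variables (p q : 'I_n -> Tm -> R) (v0 : R).

Definition H_r : matrix R n n := redLap e (fun a b => (r a b)^-1).
Definition H_x : matrix R n n := redLap e (fun a b => (x a b)^-1).

Definition voltage (a : 'I_n.+1) : Tm -> R := fun w =>
  match unlift ord0 a with
  | Some i => \sum_j (invmx H_r i j * p j w + invmx H_x i j * q j w)
  | None => v0
  end.

Definition phi (a b : 'I_n.+1) : \bar R :=
  'E_P[fun w => ((voltage a w - fine 'E_P[voltage a])
                 - (voltage b w - fine 'E_P[voltage b])) ^+ 2].
End LCPF.

(* weight of a graph T (each undirected edge counted once) *)
Definition tree_weight (R : realType) (n : nat) (w : 'I_n.+1 -> 'I_n.+1 -> \bar R)
  (T : rel 'I_n.+1) : \bar R :=
  (\sum_(a : 'I_n.+1) \sum_(b : 'I_n.+1 | T a b && (a < b)%N) w a b)%E.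

Definition is_MST (R : realType) (n : nat) (S : {set 'I_n.+1})
  (w : 'I_n.+1 -> 'I_n.+1 -> \bar R) (T : rel 'I_n.+1) : Prop :=
  is_tree_on S T /\
  (forall T' : rel 'I_n.+1, is_tree_on S T' -> (tree_weight w T <= tree_weight w T')%E).

(* Main.v *)
Require Import Defs.
From HB Require Import structures.
From mathcomp Require Import all_boot all_order all_algebra.
From mathcomp Require Import boolp classical_sets reals ereal measure.
From mathcomp Require Import lebesgue_integral hoelder random_variable.
From mathcomp Require Import functions zify ring lra.
Import Order.TTheory GRing.Theory Num.Theory.

Set Implicit Arguments.
Unset Strict Implicit.
Unset Printing Implicit Defensive.
Module P1.


Section GraphGen.
Variable V : finType.
Implicit Types (G T : rel V) (S : {set V}).

Lemma ballE G k x z : z \in hopball G k x <->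
  exists p, [/\ path G x p, last x p = z & (size p <= k)%N].
Proof.
elim: k z => [|k IH] z /=.
  rewrite inE; split=> [/eqP ->|[[|y p] [_ <- //]]]; first by exists [::].
split.
  rewrite inE => /orP[/IH [p [Hp Hl Hs]]|].
    by exists p; split => //; rewrite (leq_trans Hs).
  rewrite inE => /existsP [y /andP [/IH [p [Hp Hl Hs]] Hyz]].
  exists (rcons p z); rewrite rcons_path Hp Hl Hyz last_rcons size_rcons.
  by split.
move=> [p [Hp Hl Hs]]; rewrite inE.
case: (leqP (size p) k) => Hk.
  by apply/orP; left; apply/IH; exists p.
move: Hp Hl Hs Hk; case/lastP: p => [//|p y].
rewrite rcons_path last_rcons size_rcons ltnS => /andP [Hp Hy] <- Hs _.
apply/orP; right; rewrite inE; apply/existsP; exists (last x p).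
by rewrite Hy andbT; apply/IH; exists p.
Qed.

Definition dst G r y := hopdist G y r.

Lemma dst_path G r y p : path G y p -> last y p = r -> (dst G r y <= size p)%N.
Proof.
move=> Hp Hl; rewrite /dst /hopdist.
set s := iota 0 #|V|.+1.
have Hin : r \in hopball G (size p) y by apply/ballE; exists p.
case: (ltnP (size p) #|V|.+1) => Hs.
  rewrite leqNgt; apply/negP => Hlt.
  have := before_find 0%N Hlt; rewrite /s nth_iota // add0n Hin //.
by apply: leq_trans Hs; rewrite -(size_iota 0 #|V|.+1) find_size.
Qed.

Lemma dst_ex G r y : connect G y r ->
  exists p, [/\ path G y p, last y p = r & size p = dst G r y].
Proof.
move/connectP => [p0 Hp0 Hl0].
move: Hl0; case: (shortenP Hp0) => p Hp Hu _ Hl; move: Hl (esym Hl) => _ Hl.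
have Hsz : (size p < #|V|.+1)%N.
  have := max_card (mem (y :: p)); rewrite (card_uniqP Hu) /=.
  by rewrite ltnS; apply: leq_trans.
have Hhas : has (fun k => r \in hopball G k y) (iota 0 #|V|.+1).
  apply/hasP; exists (size p); first by rewrite mem_iota.
  by apply/ballE; exists p.
have := nth_find 0%N Hhas.
have Hf : (find (fun k => r \in hopball G k y) (iota 0 #|V|.+1) < #|V|.+1)%N.
  by rewrite -{2}(size_iota 0 #|V|.+1) -has_find.
rewrite nth_iota // add0n => /ballE [p' [Hp' Hl' Hs']].
exists p'; split => //; apply/eqP; rewrite eqn_leq dst_path // andbT.
exact: Hs'.
Qed.

Lemma dst0 G r y : connect G y r -> dst G r y = 0%N -> y = r.
Proof.
move/dst_ex => [p [_ Hl Hs]] H0; move: Hl Hs; rewrite H0.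
by case: p.
Qed.

Lemma dst_r G r : dst G r r = 0%N.
Proof. by apply/eqP; rewrite -leqn0; apply: (@dst_path G r r [::]). Qed.

Lemma dst_le G r y z : G y z -> connect G z r -> (dst G r y <= (dst G r z).+1)%N.
Proof.
move=> Hyz /dst_ex [p [Hp Hl Hs]].
rewrite -Hs; apply: (@dst_path G r y (z :: p)) => //=.
by rewrite Hyz.
Qed.

Lemma dst_step G r y : connect G y r -> y != r ->
  exists z, G y z /\ (dst G r z).+1 = dst G r y.
Proof.
move=> Hc Hyr; have [[|z p] [Hp Hl Hs]] := dst_ex Hc.
  by rewrite -Hl /= eqxx in Hyr.
move: Hp => /= /andP [Hyz Hp].
exists z; split => //.
have Hc' : connect G z r by apply/connectP; exists p.
apply/eqP; rewrite eqn_leq dst_le // andbT.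
by rewrite -Hs /= ltnS; apply: dst_path.
Qed.

Definition edges G := [set u : V * V | G u.1 u.2].

Lemma count_edges G S r : symmetric G -> r \in S -> (forall x y, G x y -> y \in S) ->
  (forall x, x \in S -> connect G x r) ->
  ((#|S| - 1).*2 <= #|edges G|)%N.
Proof.
move=> Gsym HrS HGS Hcon.
pose f x := odflt r [pick z | G x z && ((dst G r z).+1 == dst G r x)].
have Hf : forall x, x \in S :\ r -> G x (f x) /\ (dst G r (f x)).+1 = dst G r x.
  move=> x; rewrite !inE => /andP [Hxr HxS].
  have [z [Hz1 Hz2]] := dst_step (Hcon x HxS) Hxr.
  rewrite /f; case: pickP => [z' /andP [H1 /eqP H2] //|/(_ z)].
  by rewrite Hz1 Hz2 eqxx.
pose A := [set (x, f x) | x in S :\ r].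
pose B := [set (f x, x) | x in S :\ r].
have cA : #|A| = #|S :\ r| by apply: card_in_imset => x y _ _ [].
have cB : #|B| = #|S :\ r| by apply: card_in_imset => x y _ _ [].
have dAB : A :&: B = finset.set0.
  apply/setP => [[u v]]; rewrite !inE; apply/negP => /andP [].
  move=> /imsetP [x Hx [-> ->]] /imsetP [y Hy [Hxy Hfy]].
  have [_ H1] := Hf x Hx; have [_ H2] := Hf y Hy.
  rewrite Hfy in H1; rewrite -Hxy in H2; lia.
have sub : A :|: B \subset edges G.
  apply/fintype.subsetP => u; rewrite !inE => /orP [] /imsetP [x Hx ->] /=;
    have [H _] := Hf x Hx => //; by rewrite Gsym.
have HSr : r \in S by [].
have := subset_leq_card sub; rewrite cardsU dAB cards0 subn0 cA cB addnn.
by rewrite (cardsD1 r S) HSr add1n subn1 /=.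
Qed.

Definition rem_edge T u v : rel V := fun x y =>
  T x y && ~~ (((x == u) && (y == v)) || ((x == v) && (y == u))).

Lemma rem_edge_sym T u v : symmetric T -> symmetric (rem_edge T u v).
Proof.
move=> Ts x y; rewrite /rem_edge Ts; congr (_ && ~~ _).
by rewrite orbC (andbC (y == u)) (andbC (y == v)).
Qed.

Lemma rem_edge_sub T u v : subrel (rem_edge T u v) T.
Proof. by move=> x y /andP []. Qed.

Lemma edges_rem T u v : T u v -> u != v -> symmetric T ->
  #|edges (rem_edge T u v)| = (#|edges T| - 2)%N.
Proof.
move=> Tuv Huv Ts.
have -> : edges (rem_edge T u v) = edges T :\: [set (u, v); (v, u)].
  apply/setP => [[y z]]; rewrite !inE /rem_edge /= !xpair_eqE andbC.
  by congr (_ && _); rewrite !negb_or.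
rewrite cardsD; congr (_ - _)%N.
have -> : edges T :&: [set (u, v); (v, u)] = [set (u, v); (v, u)].
  apply/finset.setIidPr/fintype.subsetP => w; rewrite !inE => /orP [] /eqP -> //=.
  by rewrite Ts.
by rewrite cards2 xpair_eqE (negbTE Huv).
Qed.

Lemma tree_cut S T u v : is_tree_on S T -> T u v ->
  ~~ connect (rem_edge T u v) u v.
Proof.
move=> [Ts Ti TS Tc Tn] Tuv; apply/negP => Hc.
set T0 := rem_edge T u v.
have T0s : symmetric T0 by apply: rem_edge_sym.
have /andP [HuS HvS] := TS _ _ Tuv.
have Huv : u != v by apply: contraTneq Tuv => ->; rewrite Ti.
have Hcon : forall x, x \in S -> connect T0 x u.
  move=> x Hx; apply: (connect_sub _ (Tc x u Hx HuS)) => y z Hyz.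
  case Hr : (((y == u) && (z == v)) || ((y == v) && (z == u))).
    case/orP: Hr => /andP [/eqP -> /eqP ->] //.
    by rewrite (sym_connect_sym T0s).
  by apply: connect1; rewrite /T0 /rem_edge Hyz Hr.
have := count_edges T0s HuS _ Hcon.
rewrite edges_rem // Tn.
have H2 : (2 <= #|S|)%N.
  rewrite (cardsD1 u) HuS (cardsD1 v) !inE eq_sym Huv HvS.
  by [].
move=> /(_ (fun y z H => (andP (TS y z (rem_edge_sub H))).2)).
lia.
Qed.

Definition swap_edge T u v s t : rel V := fun x y =>
  rem_edge T u v x y || ((x == s) && (y == t)) || ((x == t) && (y == s)).

Lemma exchange_tree S T u v s t : is_tree_on S T -> T u v -> ~~ T s t ->
  s != t -> s \in S -> t \in S ->
  connect (rem_edge T u v) u s -> connect (rem_edge T u v) t v ->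
  is_tree_on S (swap_edge T u v s t).
Proof.
move=> [Ts Ti TS Tc Tn] Tuv Tst Hst HsS HtS Hus Htv.
set T' := swap_edge T u v s t.
have T's : symmetric T'.
  move=> y z; rewrite /T' /swap_edge (rem_edge_sym u v Ts).
  by rewrite [(y == s) && _]andbC [(y == t) && _]andbC orbAC.
have sub0 : subrel (rem_edge T u v) T' by move=> y z H; rewrite /T' /swap_edge H.
have Huv : u != v by apply: contraTneq Tuv => ->; rewrite Ti.
split => //.
- move=> y; rewrite /T' /swap_edge /rem_edge Ti /=.
  apply/negP => /orP [] /andP [/eqP -> /eqP Hy].
    by rewrite Hy eqxx in Hst.
  by rewrite Hy eqxx in Hst.
- move=> y z; rewrite /T' /swap_edge => /orP [/orP [/rem_edge_sub /TS //|]|];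
    by move=> /andP [/eqP -> /eqP ->]; rewrite ?HsS ?HtS.
- move=> y z Hy Hz; apply: (connect_sub _ (Tc y z Hy Hz)) => y' z' Hyz.
  have Cuv : connect T' u v.
    apply: (connect_trans (connect_sub (fun a b H => connect1 (sub0 a b H)) Hus)).
    apply: (connect_trans _ (connect_sub (fun a b H => connect1 (sub0 a b H)) Htv)).
    by apply: connect1; rewrite /T' /swap_edge !eqxx orbT.
  case Hr : (((y' == u) && (z' == v)) || ((y' == v) && (z' == u))).
    case/orP: Hr => /andP [/eqP -> /eqP ->] //.
    by rewrite (sym_connect_sym T's).
  by apply: connect1; apply: sub0; rewrite /rem_edge Hyz Hr.
- change (#|edges T'| = (#|S| - 1).*2)%N.
  have -> : edges T' = edges (rem_edge T u v) :|: [set (s, t); (t, s)].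
    by apply/setP => [[y z]]; rewrite !inE /T' /swap_edge /= !xpair_eqE orbA.
  rewrite cardsU edges_rem // cards2 xpair_eqE (negbTE Hst) /=.
  have -> : edges (rem_edge T u v) :&: [set (s, t); (t, s)] = finset.set0.
    apply/setP => [[y z]]; rewrite !inE /= !xpair_eqE.
    apply/negP => /andP [/andP [Hyz _]] /orP [] /andP [/eqP Hy /eqP Hz];
      by move: Hyz; rewrite Hy Hz ?(Ts t s) (negbTE Tst).
  rewrite cards0 subn0 -Tn.
  have : (2 <= #|edges T|)%N.
    rewrite (cardsD1 (u, v)) inE Tuv (cardsD1 (v, u)) !inE xpair_eqE /= Ts Tuv.
    by rewrite (eq_sym v u) (negbTE Huv).
  by move=> H2; rewrite subnK.
Qed.

Lemma path_avoid T s v x p : path T x p -> s \notin x :: p ->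
  path (rem_edge T s v) x p.
Proof.
elim: p x => [//|y p IH] x /= /andP [Hxy Hp].
rewrite !inE !negb_or => /andP [Hsx /andP [Hsy Hsp]].
rewrite IH ?inE ?negb_or ?Hsy ?Hsp // andbT /rem_edge Hxy /=.
by rewrite !(eq_sym x) !(eq_sym y) (negbTE Hsx) (negbTE Hsy) /= andbF.
Qed.

Lemma cross_split T (X : {pred V}) s p : path T s p -> uniq (s :: p) ->
  s \in X -> last s p \notin X ->
  exists u v, [/\ T u v, u \in X, v \notin X,
    connect (rem_edge T u v) s u & connect (rem_edge T u v) v (last s p)]
    /\ u \in s :: p /\ v \in s :: p.
Proof.
elim: p s => [|x p IH] s /=; first by move=> _ _ ->.
move=> /andP [Hsx Hp] /andP [Hsn Hu] HsX Hl.
case HxX : (x \in X).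
  have [u [v [[Tuv HuX HvX Hsu Hvl] [Hu1 Hv1]]]] := IH x Hp Hu HxX Hl.
  exists u, v; split; last by split; rewrite in_cons ?Hu1 ?Hv1 orbT.
  split => //; apply: (connect_trans _ Hsu); apply: connect1.
  rewrite /rem_edge Hsx /=; apply/negP => /orP [] /andP [/eqP Hs _].
    by move: Hsn; rewrite Hs Hu1.
  by move: Hsn; rewrite Hs Hv1.
exists s, x; split; last by rewrite !in_cons !eqxx !orbT.
split; rewrite ?HxX //.
apply/connectP; exists p => //; apply: path_avoid => //.
Qed.

Lemma reach_split T s t z p : path T z p -> last z p = s ->
  connect (rem_edge T s t) z s \/ connect (rem_edge T s t) z t.
Proof.
elim: p z => [|y p IH] z /=; first by move=> _ ->; left.
move=> /andP [Hzy Hp] Hl.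
case: (eqVneq z s) => [->|Hzs]; first by left.
case: (eqVneq z t) => [->|Hzt]; first by right.
have E : rem_edge T s t z y.
  by rewrite /rem_edge Hzy (negbTE Hzs) (negbTE Hzt).
case: (IH y Hp Hl) => H; [left|right]; exact: (connect_trans (connect1 E) H).
Qed.

End GraphGen.

End P1.
Import P1.

Module P3.


Fixpoint ancs_gen (T : finType) (f : T -> T) (k : nat) (y : T) : {set T} :=
  if k is k'.+1 then y |: ancs_gen f k' (f y) else [set y].

Section TreeS.
Variables (n : nat) (e : rel 'I_n.+1).
Local Notation V := 'I_n.+1.
Hypothesis Htree : is_tree_on [set: V] e.
Local Notation root := (@substation n).

Definition D y := dst e root y.

Lemma D_def y : hopdist e y root = D y. Proof. by []. Qed.

Lemma e_sym : symmetric e. Proof. by case: Htree. Qed.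
Lemma econ y : connect e y root.
Proof. by case: Htree => _ _ _ Tc _; apply: Tc; rewrite inE. Qed.

Lemma D_root : D root = 0%N. Proof. exact: dst_r. Qed.
Lemma D0 y : D y = 0%N -> y = root. Proof. exact/dst0/econ. Qed.
Lemma D_adj y z : e y z -> (D y <= (D z).+1)%N.
Proof. by move=> H; apply: dst_le H (econ z). Qed.
Lemma D_step y : y != root -> exists z, e y z /\ (D z).+1 = D y.
Proof. exact/dst_step/econ. Qed.

Definition desc m : rel V := fun u v => e u v && (D v < D u)%N && (D u <= m)%N.

Lemma desc_con m y : (D y <= m)%N -> connect (desc m) y root.
Proof.
move: {2}(D y) (leqnn (D y)) => k; elim: k y => [|k IH] y Hk Hm.
  by have -> : y = root by apply: D0; lia.
case: (eqVneq y root) => [->//|Hy].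
have [z [Hyz Hz]] := D_step Hy.
apply: (connect_trans (connect1 (_ : desc m y z))).
  by rewrite /desc Hyz /=; apply/andP; split; lia.
by apply: IH; lia.
Qed.

Lemma adj_neq y z : e y z -> D y != D z.
Proof.
move=> Hyz; apply/negP => /eqP HD.
have := tree_cut Htree Hyz; rewrite /negb.
have sub : subrel (desc (D y)) (rem_edge e y z).
  move=> u v /andP [/andP [Huv Hlt] Hle]; rewrite /rem_edge Huv /=.
  apply/negP => /orP [] /andP [/eqP Hu /eqP Hv]; move: Hlt; rewrite Hu Hv HD;
    by rewrite ltnn.
have Cy : connect (rem_edge e y z) y root.
  exact: (connect_sub (fun a b H => connect1 (sub a b H)) (desc_con (leqnn _))).
have Cz : connect (rem_edge e y z) z root.
  by apply: (connect_sub (fun a b H => connect1 (sub a b H))); apply: desc_con; rewrite HD.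
rewrite (connect_trans Cy) //.
by rewrite (sym_connect_sym (rem_edge_sym y z e_sym)).
Qed.

Lemma par_uniq y z1 z2 : e y z1 -> e y z2 -> (D z1 < D y)%N -> (D z2 < D y)%N ->
  z1 = z2.
Proof.
move=> H1 H2 L1 L2; apply/eqP/negP => /negP Hz.
have := tree_cut Htree H1; rewrite /negb.
set m := (D y).-1.
have sub : subrel (desc m) (rem_edge e y z1).
  move=> u v /andP [/andP [Huv Hlt] Hle]; rewrite /rem_edge Huv /=.
  apply/negP => /orP [] /andP [/eqP Hu /eqP Hv]; move: Hlt Hle; rewrite /m Hu Hv;
    lia.
have C1 : connect (rem_edge e y z1) z1 root.
  by apply: (connect_sub (fun a b H => connect1 (sub a b H))); apply: desc_con; lia.
have C2 : connect (rem_edge e y z1) z2 root.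
  by apply: (connect_sub (fun a b H => connect1 (sub a b H))); apply: desc_con; lia.
have E2 : rem_edge e y z1 y z2.
  rewrite /rem_edge H2 eqxx /= [z2 == z1]eq_sym (negbTE Hz) /=; apply/negP => /andP [/eqP Hy _].
  by move: L1; rewrite -Hy ltnn.
rewrite (connect_trans (connect1 E2)) //.
rewrite (connect_trans C2) //.
by rewrite (sym_connect_sym (rem_edge_sym y z1 e_sym)).
Qed.

Lemma adj_cases y z : e y z -> (D z).+1 = D y \/ (D y).+1 = D z.
Proof.
move=> H; have := adj_neq H; have := D_adj H.
have := D_adj (_ : e z y); rewrite e_sym => /(_ H); lia.
Qed.

Definition par y := odflt root [pick z | e y z && (D z < D y)%N].

Lemma par_spec y : y != root -> e y (par y) /\ (D (par y)).+1 = D y.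
Proof.
move=> Hy; have [z [Hz1 Hz2]] := D_step Hy.
rewrite /par; case: pickP => [z' /andP [H1 H2]|/(_ z)]; last first.
  by rewrite Hz1 -Hz2 leqnn.
by split => //; case: (adj_cases H1) => //; lia.
Qed.

Lemma par_eq y z : e y z -> (D z < D y)%N -> par y = z.
Proof.
move=> H L; have Hy : y != root.
  by apply/negP => /eqP Hy; move: L; rewrite Hy D_root.
have [P1 P2] := par_spec Hy.
by apply: par_uniq P1 H _ L; lia.
Qed.

Lemma par_root : par root = root.
Proof.
rewrite /par; case: pickP => [z /andP [_]|//].
by rewrite D_root.
Qed.

Lemma is_parentE a b : is_parent e a b = (b != root) && (par b == a).
Proof.
rewrite /is_parent !D_def.
apply/idP/idP.
  move=> /andP [H L]; rewrite (par_eq H L) eqxx andbT.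
  by apply/negP => /eqP Hb; move: L; rewrite Hb D_root.
move=> /andP [Hb /eqP <-]; have [P1 P2] := par_spec Hb.
by rewrite P1 -P2 leqnn.
Qed.

Lemma childrenE b c : (c \in children e b) = (c != root) && (par c == b).
Proof. by rewrite inE is_parentE. Qed.

Lemma nbr y z : e y z -> (y != root /\ z = par y) \/ (z != root /\ par z = y).
Proof.
move=> H; case: (adj_cases H) => L.
  left; have Hy : y != root by apply/negP => /eqP Hy; move: L; rewrite Hy D_root.
  by split => //; rewrite (par_eq H) //; lia.
right; have Hz : z != root by apply/negP => /eqP Hz; move: L; rewrite Hz D_root.
have Hzy : e z y by rewrite e_sym.
by split => //; rewrite (par_eq Hzy) //; lia.
Qed.

Lemma D_ind (Pr : V -> Prop) : Pr root ->
  (forall y, y != root -> Pr (par y) -> Pr y) -> forall y, Pr y.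
Proof.
move=> H0 HS y; move: {2}(D y) (leqnn (D y)) => k; elim: k y => [|k IH] y Hk.
  by have -> : y = root by apply: D0; lia.
case: (eqVneq y root) => [->//|Hy].
apply: HS => //; apply: IH; have [_ P2] := par_spec Hy; lia.
Qed.

Definition A y := ancs_gen par (D y) y.

Lemma A_root : A root = [set root].
Proof. by rewrite /A D_root. Qed.

Lemma A_par y : y != root -> A y = y |: A (par y).
Proof. by move=> Hy; have [_ P2] := par_spec Hy; rewrite /A -P2. Qed.

Lemma A_self y : y \in A y.
Proof.
case: (eqVneq y root) => [->|Hy]; first by rewrite A_root inE.
by rewrite A_par // !inE eqxx.
Qed.

Lemma A_D c y : c \in A y -> (D c <= D y)%N /\ (D c = D y -> c = y).
Proof.
elim/D_ind: y c => [|y Hy IH] c.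
  by rewrite A_root inE => /eqP ->.
rewrite A_par // !inE => /orP [/eqP -> //|/IH [L1 L2]].
have [_ P2] := par_spec Hy; split; lia.
Qed.

Lemma A_trans c z y : c \in A z -> z \in A y -> c \in A y.
Proof.
move=> Hc; elim/D_ind: y => [|y Hy IH].
  by rewrite A_root inE => /eqP Hz; move: Hc; rewrite Hz A_root.
rewrite A_par // !inE => /orP [/eqP Hz|/IH ->]; last by rewrite orbT.
by move: Hc; rewrite Hz A_par // !inE.
Qed.

Lemma A_chain c1 c2 y : c1 \in A y -> c2 \in A y -> c1 \in A c2 \/ c2 \in A c1.
Proof.
elim/D_ind: y => [|y Hy IH].
  by rewrite A_root !inE => /eqP -> /eqP ->; left; rewrite A_self.
rewrite A_par // !inE => /orP [/eqP ->|H1] /orP [/eqP ->|H2].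
- by left; rewrite A_self.
- by right; rewrite A_par // !inE H2 orbT.
- by left; rewrite A_par // !inE H1 orbT.
- exact: IH.
Qed.

Lemma A_parent y : y != root -> par y \in A y.
Proof. by move=> Hy; rewrite A_par // !inE A_self orbT. Qed.

Lemma A_sub_par y c : y != root -> c \in A (par y) -> c \in A y.
Proof. by move=> Hy H; rewrite A_par // !inE H orbT. Qed.

Lemma A_child I J : I \in A J -> I != J ->
  exists z, [/\ z != root, par z = I & z \in A J].
Proof.
elim/D_ind: J => [|J HJ IH].
  by rewrite A_root inE => /eqP ->; rewrite eqxx.
rewrite A_par // !inE => /orP [/eqP ->|H]; first by rewrite eqxx.
move=> HIJ; case: (eqVneq (par J) I) => [<-|Hne].
  by exists J; split => //; rewrite !inE eqxx.
have HI' : I != par J by rewrite eq_sym.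
have [z [Hz1 Hz2 Hz3]] := IH H HI'.
by exists z; split => //; rewrite !inE Hz3 orbT.
Qed.

Lemma D_child z : z != root -> D z = (D (par z)).+1.
Proof. by move=> Hz; have [_ ->] := par_spec Hz. Qed.

Lemma same_depth z1 z2 J : D z1 = D z2 -> z1 \in A J -> z2 \in A J -> z1 = z2.
Proof.
move=> HD H1 H2; case: (A_chain H1 H2) => H.
  by have [_ ->] := A_D H.
by have [_ ->] := A_D H.
Qed.

End TreeS.

End P3.
Import P3.

Module P2.
Local Open Scope ring_scope.


Section MST.
Variables (R : realType) (n : nat).
Local Notation V := 'I_n.+1.
Variable w : V -> V -> R.
Hypothesis wsym : forall a b, w a b = w b a.

Definition gw (pr : V * V) : R := if (pr.1 < pr.2)%N then w pr.1 pr.2 else 0.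
Definition W (T : rel V) : R := \sum_(pr in edges T) gw pr.

Lemma tree_weightE T : tree_weight (fun a b => (w a b)%:E) T = (W T)%:E.
Proof.
rewrite /tree_weight; under eq_bigr do rewrite sumEFin.
rewrite sumEFin pair_big_dep /W; congr (_%:E).
rewrite big_mkcond [RHS]big_mkcond; apply: eq_bigr => [[a b]] _ /=.
by rewrite /gw inE /=; case: (T a b); case: (a < b)%N.
Qed.

Lemma gw2 u v : u != v -> gw (u, v) + gw (v, u) = w u v.
Proof.
move=> Huv; rewrite /gw /=; case: (ltngtP u v) => H.
- by rewrite addr0.
- by rewrite add0r wsym.
- by move: Huv; rewrite (val_inj H) eqxx.
Qed.

Lemma W_swap T u v s t : symmetric T -> T u v -> ~~ T s t -> u != v -> s != t ->
  W (swap_edge T u v s t) = W T - w u v + w s t.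
Proof.
move=> Ts Tuv Tst Huv Hst.
have Hvu : (v, u) \in edges T :\ (u, v).
  by rewrite !inE xpair_eqE (eq_sym v u) (negbTE Huv) /= Ts.
have Hst1 : (s, t) \in edges (swap_edge T u v s t).
  by rewrite inE /swap_edge /= !eqxx orbT.
have Hts1 : (t, s) \in edges (swap_edge T u v s t) :\ (s, t).
  by rewrite !inE xpair_eqE (eq_sym t s) (negbTE Hst) /= /swap_edge !eqxx !orbT.
have Huv1 : (u, v) \in edges T by rewrite inE.
rewrite /W (big_setD1 _ Huv1) (big_setD1 _ Hvu).
rewrite (big_setD1 _ Hst1) (big_setD1 _ Hts1).
have -> : edges (swap_edge T u v s t) :\ (s, t) :\ (t, s) = edges T :\ (u, v) :\ (v, u).
  apply/setP => pr; rewrite !inE.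
  case: (eqVneq pr (t, s)) => [->|H1] /=; first by rewrite Ts (negbTE Tst) !andbF.
  case: (eqVneq pr (s, t)) => [->|H2] /=; first by rewrite (negbTE Tst) !andbF.
  case: pr H1 H2 => y z; rewrite /swap_edge !xpair_eqE /= => /negbTE -> /negbTE ->.
  rewrite !orbF /rem_edge.
  by case: (T y z); case: (y == u); case: (z == v); case: (y == v); case: (z == u).
rewrite /= -(gw2 Huv) -(gw2 Hst); ring.
Qed.

Section Tree.
Variables (S : {set V}) (T : rel V).
Hypothesis Htree : is_tree_on S T.
Hypothesis Hmin : forall T', is_tree_on S T' -> W T <= W T'.
Hypothesis Huniq : forall T', is_tree_on S T' -> W T' <= W T -> T' =2 T.

Lemma mst_exch u v s t : T u v -> ~~ T s t -> s != t -> s \in S -> t \in S ->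
  connect (rem_edge T u v) u s -> connect (rem_edge T u v) t v ->
  w s t <= w u v -> False.
Proof.
move=> Tuv Tst Hst HsS HtS Hus Htv Hw.
have [Ts Ti _ _ _] := Htree.
have Huv : u != v by apply: contraTneq Tuv => ->; rewrite Ti.
have Ht' := exchange_tree Htree Tuv Tst Hst HsS HtS Hus Htv.
have := Huniq Ht'; rewrite W_swap // => /(_ _) H.
have : T s t.
  rewrite -H; first by rewrite /swap_edge !eqxx orbT.
  rewrite -subr_ge0; have : 0 <= w u v - w s t by rewrite subr_ge0.
  by move=> h; rewrite (_ : _ - _ = w u v - w s t) //; ring.
by rewrite (negbTE Tst).
Qed.

Lemma mst_cut (X : {pred V}) s t : s \in X -> t \notin X -> s \in S -> t \in S ->
  (forall u v, u \in S -> v \in S -> u \in X -> v \notin X -> w s t <= w u v) ->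
  T s t.
Proof.
move=> HsX HtX HsS HtS Hw.
have [Ts Ti TS Tc _] := Htree.
apply/negPn/negP => Tst.
have /connectP [p0 Hp0 Hl0] := Tc s t HsS HtS.
move: Hl0; case: (shortenP Hp0) => p Hp Hu _ Hl.
have HlX : last s p \notin X by rewrite -Hl.
have [u [v [[Tuv HuX HvX Hsu Hvt] _]]] := cross_split Hp Hu HsX HlX.
have /andP [HuS HvS] := TS _ _ Tuv.
have T0s := rem_edge_sym u v Ts.
have Hst : s != t by apply: contraTneq HsX => ->.
apply: (mst_exch Tuv Tst Hst HsS HtS).
- by rewrite (sym_connect_sym T0s).
- by rewrite (sym_connect_sym T0s) Hl.
- exact: Hw.
Qed.

Lemma mst_tri s t z : T s t -> z \in S -> z != s -> z != t ->
  w s z <= w s t -> w z t <= w s t -> False.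
Proof.
move=> Tst HzS Hzs Hzt H1 H2.
have [Ts Ti TS Tc _] := Htree.
have /andP [HsS HtS] := TS _ _ Tst.
have T0s := rem_edge_sym s t Ts.
have Hcut := tree_cut Htree Tst.
have /connectP [p Hp Hl] := Tc z s HzS HsS.
case: (reach_split t Hp (esym Hl)) => Hc.
-
  have Tzt : ~~ T z t.
    apply/negP => Tzt; move: Hcut; rewrite (sym_connect_sym T0s) in Hc.
    have : connect (rem_edge T s t) s t.
      apply: (connect_trans Hc); apply: connect1.
      by rewrite /rem_edge Tzt (negbTE Hzs) (negbTE Hzt).
    by move=> ->.
  apply: (mst_exch Tst Tzt Hzt HzS HtS) => //.
  by rewrite (sym_connect_sym T0s).
- have Tsz : ~~ T s z.
    apply/negP => Tsz; move: Hcut.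
    have : connect (rem_edge T s t) s t.
      apply: (connect_trans _ Hc); apply: connect1.
      by rewrite /rem_edge Tsz eqxx (negbTE Hzs) (negbTE Hzt) ?andbF.
    by move=> ->.
  have Hsz : s != z by rewrite eq_sym.
  by apply: (mst_exch Tst Tsz Hsz HsS HzS) => //.
Qed.

End Tree.
End MST.

End P2.
Import P2.

Module P4.
Local Open Scope ring_scope.


Lemma sum_if_eq (R : ringType) (m : nat) (i : 'I_m) (c : R) (F : 'I_m -> R) :
  \sum_k ((if i == k then c else 0) * F k) = c * F i.
Proof.
rewrite (bigD1 i) //= eqxx big1 ?addr0 // => k Hk.
by rewrite eq_sym (negbTE Hk) mul0r.
Qed.

Section Kmat.
Variables (R : realFieldType) (n : nat) (e : rel 'I_n.+1).
Local Notation V := 'I_n.+1.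
Local Notation root := (@substation n).
Hypothesis Htree : is_tree_on [set: V] e.
Variable rr : V -> V -> R.
Hypothesis Hpos : forall u w, e u w -> 0 < rr u w /\ rr u w = rr w u.

Local Notation par := (par e).
Local Notation A := (A e).
Local Notation D := (D e).

Definition rho c := rr c (par c).

Definition Kf y j := \sum_(c : V | c != root)
  (if (c \in A y) && (c \in A j) then rho c else 0).

Definition Kmx : matrix R n n := \matrix_(i, j) Kf (lift ord0 i) (lift ord0 j).

Lemma rho_gt0 c : c != root -> 0 < rho c.
Proof. by move=> Hc; have [H _] := par_spec Htree Hc; have [] := Hpos H. Qed.

Lemma Kf_root j : Kf root j = 0.
Proof.
rewrite /Kf big1 // => c Hc; rewrite A_root // inE.
by rewrite (negbTE Hc).
Qed.

Lemma notA_par y : y != root -> y \notin A (par y).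
Proof.
move=> Hy; apply/negP => /(A_D Htree) [L _].
by move: L; rewrite (D_child Htree Hy) ltnn.
Qed.

Lemma Kf_par y j : y != root -> Kf y j - Kf (par y) j = if y \in A j then rho y else 0.
Proof.
move=> Hy; rewrite /Kf -sumrB (bigD1 y) //= big1 ?addr0.
  by rewrite A_self // (negbTE (notA_par Hy)) /=; case: (y \in A j); rewrite ?subr0.
move=> c /andP [_ Hcy]; rewrite (A_par Htree Hy) !inE (negbTE Hcy) /=.
by rewrite subrr.
Qed.

Lemma HK : redLap e (fun a b => (rr a b)^-1) *m Kmx = 1%:M.
Proof.
apply/matrixP => i j; rewrite !mxE.
set I := lift ord0 i; set J := lift ord0 j.
have HIr : I != root by rewrite /I; apply/negP => /eqP /(congr1 val) /=; rewrite /bump /=.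
pose w a b := (rr a b)^-1.
have step1 : \sum_k redLap e (fun a b => (rr a b)^-1) i k * Kmx k j =
   \sum_(z | e I z) w I z * (Kf I J - Kf z J).
  under eq_bigr do rewrite !mxE.
  have -> : \sum_k ((if i == k then \sum_(k0 | e (lift ord0 i) k0) (rr (lift ord0 i) k0)^-1
            else if e (lift ord0 i) (lift ord0 k) then - (rr (lift ord0 i) (lift ord0 k))^-1
                 else 0) * Kf (lift ord0 k) (lift ord0 j))
     = \sum_k ((if i == k then \sum_(z | e I z) w I z else 0) * Kf (lift ord0 k) J)
       - \sum_k ((if e I (lift ord0 k) then w I (lift ord0 k) else 0) * Kf (lift ord0 k) J).
    rewrite -sumrB; apply: eq_bigr => k _.
    case: (eqVneq i k) => [<-|Hik].
      have -> : e I I = false by case: Htree => _ Ti _ _ _; rewrite Ti.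
      by rewrite mul0r subr0.
    by case: (e I (lift ord0 k)); rewrite ?mul0r ?subr0 ?sub0r ?mulNr.
  have E1 : \sum_k ((if i == k then \sum_(z | e I z) w I z else 0) * Kf (lift ord0 k) J)
      = (\sum_(z | e I z) w I z) * Kf I J.
    exact: sum_if_eq.
  rewrite E1.
  have -> : \sum_k ((if e I (lift ord0 k) then w I (lift ord0 k) else 0) * Kf (lift ord0 k) J)
      = \sum_z ((if e I z then w I z else 0) * Kf z J).
    by rewrite [RHS]big_ord_recl Kf_root mulr0 add0r.
  have -> : \sum_z ((if e I z then w I z else 0) * Kf z J) =
      \sum_(z | e I z) w I z * Kf z J.
    by rewrite [RHS]big_mkcond; apply: eq_bigr => z _; case: (e I z); rewrite ?mul0r.
  rewrite big_distrl /= -sumrB.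
  by apply: eq_bigr => z _; rewrite mulrBr.
rewrite step1.
have [Hep Hdp] := par_spec Htree HIr.
rewrite (bigD1 (par I)) //=.
have Hpar : w I (par I) * (Kf I J - Kf (par I) J) = (I \in A J)%:R.
  rewrite Kf_par //; case: (I \in A J); last by rewrite mulr0.
  by rewrite /w mulVf //; apply: lt0r_neq0; apply: rho_gt0.
rewrite Hpar.
have Hrest : \sum_(z | e I z && (z != par I)) w I z * (Kf I J - Kf z J) =
    - \sum_(z | e I z && (z != par I)) (z \in A J)%:R.
  rewrite -sumrN; apply: eq_bigr => z /andP [Hz Hzp].
  have [[_ Hzz]|[Hzr Hpz]] := nbr Htree Hz; first by rewrite Hzz eqxx in Hzp.
  have -> : Kf I J - Kf z J = - (Kf z J - Kf (par z) J) by rewrite Hpz opprB.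
  rewrite Kf_par // /w.
  have Hzi : e z I by rewrite (e_sym Htree).
  have [_ ->] := Hpos Hz.
  rewrite -Hpz -/(rho z); case: (z \in A J); rewrite ?oppr0 ?mulr0 //.
  by rewrite mulrN mulVf //; apply: lt0r_neq0; apply: rho_gt0.
rewrite Hrest.
have Hcnt : \sum_(z | e I z && (z != par I)) ((z \in A J)%:R : R) =
    ((I \in A J) && (I != J))%:R.
  case: (boolP ((I \in A J) && (I != J))) => [/andP [HIJ HneIJ]|Hno].
    have [z0 [Hz0r Hz0p Hz0J]] := A_child Htree HIJ HneIJ.
    have [Hz0e Hz0d] := par_spec Htree Hz0r.
    have Hez0 : e I z0 by rewrite -Hz0p (e_sym Htree).
    have Hz0np : z0 != par I.
      apply/negP => /eqP Hz; move: Hz0d Hdp; rewrite Hz0p -Hz; lia.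
    rewrite (bigD1 z0) /=; last by rewrite Hez0 Hz0np.
    rewrite Hz0J big1 ?addr0 //.
    move=> z /andP [/andP [Hz Hzp] Hzz0].
    case: (boolP (z \in A J)) => // HzJ.
    have [[_ Hzz]|[Hzr Hpz]] := nbr Htree Hz; first by rewrite Hzz eqxx in Hzp.
    have Hdz : D z = D z0 by rewrite (D_child Htree Hzr) (D_child Htree Hz0r) Hpz Hz0p.
    by rewrite (same_depth Htree Hdz HzJ Hz0J) eqxx in Hzz0.
  rewrite big1 // => z /andP [Hz Hzp].
  case: (boolP (z \in A J)) => // HzJ.
  have [[_ Hzz]|[Hzr Hpz]] := nbr Htree Hz; first by rewrite Hzz eqxx in Hzp.
  have HIz : I \in A z by rewrite -Hpz A_parent.
  have HIJ := A_trans Htree HIz HzJ.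
  move: Hno; rewrite HIJ /= negbK => /eqP HIJ'.
  have [L _] := A_D Htree HzJ.
  by move: L; rewrite -HIJ' (D_child Htree Hzr) Hpz ltnn.
rewrite Hcnt.
have -> : (i == j) = (I == J).
  by rewrite /I /J (inj_eq lift_inj).
case: (eqVneq I J) => [<-|HneIJ]; first by rewrite A_self // andbF subr0.
by case: (I \in A J); rewrite /= ?subr0 ?subrr.
Qed.

Lemma invHK : invmx (redLap e (fun a b => (rr a b)^-1)) = Kmx.
Proof.
have [Hu _] := mulmx1_unit HK.
by rewrite -[LHS]mulmx1 -HK mulKmx.
Qed.

End Kmat.

End P4.
Import P4.

Module P5.
Local Open Scope ring_scope.


Section Cov.
Context d (T : measurableType d) (R : realType) (P : probability T R).
Local Notation L2 := (Lfun P 2%:E).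

Definition C (X Y : T -> R) : R := fine (covariance P X Y).

Lemma Pfin : P setT \is a fin_num.
Proof. exact: fin_num_measure. Qed.

Lemma L2_L1 X : X \in L2 -> X \in Lfun P 1.
Proof. move=> HX; exact: (Lfun_subset12 Pfin HX). Qed.

Lemma covE X Y : X \in L2 -> Y \in L2 -> covariance P X Y = (C X Y)%:E.
Proof.
move=> HX HY; rewrite /C fineK //.
by apply: covariance_fin_num; [apply: L2_L1|apply: L2_L1|apply: Lfun2_mul_Lfun1].
Qed.

Lemma L2D X Y : X \in L2 -> Y \in L2 -> (X \+ Y)%R \in L2.
Proof. by move=> HX HY; apply: (@rpredD _ (Lfun P 2%:E) X Y HX HY); rewrite lee1n. Qed.

Lemma L2Z a X : X \in L2 -> (a \o* X)%R \in L2.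
Proof. by move=> HX; apply: Lfun_scale => //; rewrite ler1n. Qed.

Lemma L2cst c : cst c \in L2.
Proof. exact: Lfun_cst. Qed.

Lemma CDl X Y Z : X \in L2 -> Y \in L2 -> Z \in L2 -> C (X \+ Y)%R Z = C X Z + C Y Z.
Proof.
move=> HX HY HZ; apply: EFin_inj.
by rewrite EFinD -!covE ?L2D // covarianceDl.
Qed.

Lemma CZl a X Y : X \in L2 -> Y \in L2 -> C (a \o* X)%R Y = a * C X Y.
Proof.
move=> HX HY; apply: EFin_inj.
rewrite EFinM -!covE ?L2Z // covarianceZl //; [apply: L2_L1|apply: L2_L1|apply: Lfun2_mul_Lfun1] => //.
Qed.

Lemma CC X Y : C X Y = C Y X.
Proof. by rewrite /C covarianceC. Qed.

Lemma L2sum (I : Type) (s : seq I) (F : I -> T -> R) :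
  (forall j, F j \in L2) -> (\sum_(j <- s) F j) \in L2.
Proof.
move=> HF; elim: s => [|j s IH]; first by rewrite big_nil; exact: (L2cst 0).
by rewrite big_cons; apply: L2D.
Qed.

Lemma Csuml (I : Type) (s : seq I) (F : I -> T -> R) Z :
  (forall j, F j \in L2) -> Z \in L2 ->
  C (\sum_(j <- s) F j) Z = \sum_(j <- s) C (F j) Z.
Proof.
move=> HF HZ; elim: s => [|j s IH].
  rewrite !big_nil /C.
  have -> : (0 : T -> R) = cst 0 by [].
  by rewrite covariance_cst_l.
rewrite !big_cons -IH; apply: CDl => //; exact: L2sum.
Qed.

Lemma Csumr (I : Type) (s : seq I) (F : I -> T -> R) Z :
  (forall j, F j \in L2) -> Z \in L2 ->
  C Z (\sum_(j <- s) F j) = \sum_(j <- s) C Z (F j).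
Proof.
by move=> HF HZ; rewrite CC Csuml //; apply: eq_bigr => j _; rewrite CC.
Qed.

End Cov.


Section PhiF.
Context d (Tm : measurableType d) (R : realType) (P : probability Tm R).
Variables (n : nat) (e : rel 'I_n.+1) (r x : 'I_n.+1 -> 'I_n.+1 -> R).
Variables (p q : 'I_n -> Tm -> R) (v0 : R).
Local Notation V := 'I_n.+1.
Local Notation root := (@substation n).
Local Notation L2 := (Lfun P 2%:E).
Hypothesis Htree : is_tree_on [set: V] e.
Hypothesis Hrx : forall u w, e u w ->
  0 < r u w /\ 0 < x u w /\ r u w = r w u /\ x u w = x w u.
Hypothesis Hp : forall i, p i \in L2.
Hypothesis Hq : forall i, q i \in L2.
Hypothesis Hpp : forall i j, i != j -> covariance P (p i) (p j) = 0%E.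
Hypothesis Hqq : forall i j, i != j -> covariance P (q i) (q j) = 0%E.
Hypothesis Hqp : forall i j, i != j -> covariance P (q i) (p j) = 0%E.

Let Hr : forall u w, e u w -> 0 < r u w /\ r u w = r w u.
Proof. by move=> u w H; have [? [? [? ?]]] := Hrx H. Qed.
Let Hx : forall u w, e u w -> 0 < x u w /\ x u w = x w u.
Proof. by move=> u w H; have [? [? [? ?]]] := Hrx H. Qed.

Definition Yf (a b : 'I_n -> R) j : Tm -> R := (a j \o* p j \+ b j \o* q j)%R.

Lemma Yf_L2 a b j : Yf a b j \in L2.
Proof. by apply: L2D; apply: L2Z. Qed.

Definition vol y := voltage e r x p q v0 y.
Definition ka y (j : 'I_n) := Kf e r y (lift ord0 j).
Definition kb y (j : 'I_n) := Kf e x y (lift ord0 j).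
Definition cv (y : V) := if y == root then v0 else 0.

Lemma volE y : vol y = (cst (cv y) \+ \sum_j Yf (ka y) (kb y) j)%R.
Proof.
apply/funext => w; rewrite /vol /voltage fct_sumE /=.
case: unliftP => [i ->|->] /=.
  rewrite /H_r /H_x (invHK Htree Hr) (invHK Htree Hx) /cv.
  have -> : (lift ord0 i == root) = false.
    by apply/negP => /eqP /(congr1 val).
  rewrite add0r; apply: eq_bigr => j _; rewrite !mxE.
  by rewrite /Yf /ka /kb /=; ring.
rewrite /cv eqxx big1 ?addr0 // => j _.
by rewrite /Yf /ka /kb /= !Kf_root // !mulr0 addr0.
Qed.

Lemma vol_L2 y : vol y \in L2.
Proof.
by rewrite volE; apply: L2D; [exact: L2cst|apply: L2sum => j; exact: Yf_L2].
Qed.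

Definition al u w (j : 'I_n) := ka u j - ka w j.
Definition be u w (j : 'I_n) := kb u j - kb w j.

Lemma vol_diff u w :
  (vol u \- vol w = cst (cv u - cv w) \+ \sum_j Yf (al u w) (be u w) j)%R.
Proof.
apply/funext => t; rewrite !volE /= !fct_sumE /=.
rewrite (_ : \sum_j Yf (al u w) (be u w) j t =
   \sum_j Yf (ka u) (kb u) j t - \sum_j Yf (ka w) (kb w) j t).
  ring.
rewrite -sumrB; apply: eq_bigr => j _; rewrite /Yf /al /be /=; ring.
Qed.

Definition sp j := C P (p j) (p j).
Definition sq j := C P (q j) (q j).
Definition sqp j := C P (q j) (p j).
Definition G j (a b : R) := a ^+ 2 * sp j + b ^+ 2 * sq j + 2 * a * b * sqp j.

Lemma CY a b j k : C P (Yf a b j) (Yf a b k) =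
  a j * a k * C P (p j) (p k) + a j * b k * C P (p j) (q k) +
  b j * a k * C P (q j) (p k) + b j * b k * C P (q j) (q k).
Proof.
rewrite /Yf CDl ?L2Z ?Yf_L2 // !CZl ?Yf_L2 //.
rewrite [C P (p j) _]CC [C P (q j) _]CC.
rewrite !CDl ?L2Z // !CZl //.
rewrite [C P (p k) (p j)]CC [C P (q k) (p j)]CC [C P (p k) (q j)]CC [C P (q k) (q j)]CC.
ring.
Qed.

Lemma C0 X Y : covariance P X Y = 0%E -> C P X Y = 0.
Proof. by rewrite /C => ->. Qed.

Lemma VsumY c a b : 'V_P[(cst c \+ \sum_j Yf a b j)%R] = (\sum_j G j (a j) (b j))%:E.
Proof.
have HS : (\sum_j Yf a b j) \in L2 by apply: L2sum => j; exact: Yf_L2.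
rewrite varianceD_cst_l // /variance covE //.
congr (_%:E).
rewrite Csuml //; last exact: Yf_L2.
apply: eq_bigr => j _.
rewrite Csumr //; last exact: Yf_L2.
rewrite (bigD1 j) //= big1 ?addr0.
  by rewrite CY /G /sp /sq /sqp [C P (p j) (q j)]CC; ring.
move=> k Hkj; rewrite CY.
have Hjk : j != k by rewrite eq_sym.
rewrite (C0 (Hpp Hjk)) (C0 (Hqq Hjk)) (C0 (Hqp Hjk)).
rewrite CC (C0 (Hqp Hkj)).
  by rewrite !mulr0 !addr0.
by move=> i; exact: Yf_L2.
Qed.


Lemma phiV u w : phi P e r x p q v0 u w = 'V_P[(vol u \- vol w)%R].
Proof.
have Hfin : fine 'E_P[(vol u \- vol w)%R] = fine 'E_P[vol u] - fine 'E_P[vol w].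
  rewrite expectationB; try exact: (L2_L1 (vol_L2 _)).
  by rewrite fineB //; apply: expectation_fin_num; exact: (L2_L1 (vol_L2 _)).
rewrite /phi /variance covariance.unlock Hfin.
congr (expectation P _); apply/funext => t /=.
rewrite /vol expr2 !fctE /=; ring.
Qed.

Definition PH u w := \sum_j G j (al u w j) (be u w j).

Lemma phiE u w : phi P e r x p q v0 u w = (PH u w)%:E.
Proof. by rewrite phiV vol_diff VsumY. Qed.

Lemma PH_ge0 u w : 0 <= PH u w.
Proof.
have := variance_ge0 P (vol u \- vol w)%R.
by rewrite -phiV phiE lee_fin.
Qed.

End PhiF.

End P5.
Import P5.

Module P6.
Local Open Scope ring_scope.


Section Mono.
Context d (Tm : measurableType d) (R : realType) (P : probability Tm R).
Variables (n : nat) (e : rel 'I_n.+1) (r x : 'I_n.+1 -> 'I_n.+1 -> R).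
Variables (p q : 'I_n -> Tm -> R).
Local Notation V := 'I_n.+1.
Local Notation root := (@substation n).
Local Notation L2 := (Lfun P 2%:E).
Hypothesis Htree : is_tree_on [set: V] e.
Hypothesis Hrx : forall u w, e u w ->
  0 < r u w /\ 0 < x u w /\ r u w = r w u /\ x u w = x w u.
Hypothesis Hp : forall i, p i \in L2.
Hypothesis Hq : forall i, q i \in L2.
Hypothesis Hcqp : forall i, (0 <= covariance P (q i) (p i))%E.

Let Hr : forall u w, e u w -> 0 < r u w /\ r u w = r w u.
Proof. by move=> u w H; have [? [? [? ?]]] := Hrx H. Qed.
Let Hx : forall u w, e u w -> 0 < x u w /\ x u w = x w u.
Proof. by move=> u w H; have [? [? [? ?]]] := Hrx H. Qed.

Local Notation A := (A e).
Local Notation GG := (G P p q).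

Lemma sp_ge0 j : 0 <= sp P p j.
Proof. by rewrite /sp /C; apply: fine_ge0; exact: variance_ge0. Qed.
Lemma sq_ge0 j : 0 <= sq P q j.
Proof. by rewrite /sq /C; apply: fine_ge0; exact: variance_ge0. Qed.
Lemma sqp_ge0 j : 0 <= sqp P p q j.
Proof. by rewrite /sqp /C; apply: fine_ge0. Qed.

Lemma G_neg j a b : GG j (- a) (- b) = GG j a b.
Proof. by rewrite /G; ring. Qed.

Lemma G_mono j a a' b b' : 0 <= a' -> a' <= a -> 0 <= b' -> b' <= b ->
  GG j a' b' <= GG j a b.
Proof.
move=> a0 aa b0 bb; rewrite /G.
have H1 : a' ^+ 2 <= a ^+ 2 by rewrite !expr2 ler_pM.
have H2 : b' ^+ 2 <= b ^+ 2 by rewrite !expr2 ler_pM.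
have H3 : a' * b' <= a * b by rewrite ler_pM.
apply: lerD; first apply: lerD.
- exact: (ler_wpM2r (sp_ge0 j) H1).
- exact: (ler_wpM2r (sq_ge0 j) H2).
- apply: (ler_wpM2r (sqp_ge0 j)).
  rewrite -!mulrA; apply: (ler_wpM2l (_ : 0 <= 2)) => //.
Qed.

Lemma mono_sum j (t t' rr xx : V -> R) :
  (forall c, c != root -> 0 <= rr c) -> (forall c, c != root -> 0 <= xx c) ->
  (forall c, 0 <= t c) \/ (forall c, t c <= 0) ->
  (forall c, t' c = 0 \/ t' c = t c) ->
  GG j (\sum_(c | c != root) t' c * rr c) (\sum_(c | c != root) t' c * xx c) <=
  GG j (\sum_(c | c != root) t c * rr c) (\sum_(c | c != root) t c * xx c).
Proof.
move=> Hrr Hxx Hsg Hb.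
have pos : forall t t' : V -> R, (forall c, 0 <= t c) ->
    (forall c, t' c = 0 \/ t' c = t c) ->
    GG j (\sum_(c | c != root) t' c * rr c) (\sum_(c | c != root) t' c * xx c) <=
    GG j (\sum_(c | c != root) t c * rr c) (\sum_(c | c != root) t c * xx c).
  move=> t1 t1' Ht Hb1; apply: G_mono.
  - apply: sumr_ge0 => c Hc; case: (Hb1 c) => ->; rewrite ?mul0r //.
    by apply: mulr_ge0 => //; apply: Hrr.
  - apply: ler_sum => c Hc; case: (Hb1 c) => ->; rewrite ?mul0r //.
    by apply: mulr_ge0 => //; apply: Hrr.
  - apply: sumr_ge0 => c Hc; case: (Hb1 c) => ->; rewrite ?mul0r //.
    by apply: mulr_ge0 => //; apply: Hxx.
  - apply: ler_sum => c Hc; case: (Hb1 c) => ->; rewrite ?mul0r //.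
    by apply: mulr_ge0 => //; apply: Hxx.
case: Hsg => Hs; first exact: pos.
have := pos (fun c => - t c) (fun c => - t' c).
rewrite -[X in _ -> _ -> X <= _](G_neg j) -[X in _ -> _ -> _ <= X](G_neg j).
rewrite !(eq_bigr _ (fun c _ => mulNr _ _)) !sumrN !opprK; apply.
  by move=> c; rewrite oppr_ge0.
by move=> c; case: (Hb c) => ->; [left; rewrite oppr0|right].
Qed.


Lemma KfE (rr : V -> V -> R) y J : Kf e rr y J =
  \sum_(c | c != root) ((c \in A y)%:R * (c \in A J)%:R) * rho e rr c.
Proof.
by apply: eq_bigr => c _; case: (c \in A y); case: (c \in A J); rewrite /= ?mul1r ?mul0r.
Qed.

Definition tt u w J c : R := ((c \in A u)%:R - (c \in A w)%:R) * (c \in A J)%:R.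

Lemma al_sum u w j : al e r u w j =
  \sum_(c | c != root) tt u w (lift ord0 j) c * rho e r c.
Proof. by rewrite /al /ka !KfE -sumrB; apply: eq_bigr => c _; rewrite /tt; ring. Qed.

Lemma be_sum u w j : be e x u w j =
  \sum_(c | c != root) tt u w (lift ord0 j) c * rho e x c.
Proof. by rewrite /be /kb !KfE -sumrB; apply: eq_bigr => c _; rewrite /tt; ring. Qed.

Definition betw z u w := (A z \subset A u :|: A w) && (A u :&: A w \subset A z).

Lemma sign_t u w J : (forall c, 0 <= tt u w J c) \/ (forall c, tt u w J c <= 0).
Proof.
case: (boolP [exists c, (c \in A w) && (c \notin A u) && (c \in A J)]).
  move=> /existsP [c' /andP [/andP [Hw' Hu'] HJ']]; right => c; rewrite /tt.
  case Hu: (c \in A u); case Hw: (c \in A w); case HJ: (c \in A J);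
    rewrite /= ?subrr ?subr0 ?sub0r ?mulr0 ?mulr1 ?oppr_le0 ?ler01 ?lexx //.
  case: (A_chain Htree HJ HJ') => H.
    by move: Hw; rewrite (A_trans Htree H Hw').
  by move: Hu'; rewrite (A_trans Htree H (idP Hu)).
move=> Hn; left => c; rewrite /tt.
case Hu: (c \in A u); case Hw: (c \in A w); case HJ: (c \in A J);
  rewrite /= ?subrr ?subr0 ?sub0r ?mulr0 ?mulr1 ?oppr_ge0 ?ler01 ?lexx //.
by move: Hn; rewrite negb_exists => /forallP /(_ c); rewrite Hu Hw HJ.
Qed.

Lemma betw_t z u w J c : betw z u w -> tt z w J c = 0 \/ tt z w J c = tt u w J c.
Proof.
move=> /andP [/fintype.subsetP H1 /fintype.subsetP H2].
have {H1} H1 := H1 c; have {H2} H2 := H2 c; move: H1 H2; rewrite /tt !inE.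
case: (c \in A z); case: (c \in A u); case: (c \in A w); case: (c \in A J);
  rewrite /= ?subrr ?mul0r ?mulr0; by [left|right|move=> /(_ isT)|move=> _ /(_ isT)].
Qed.

Lemma rho_ge0 (rr : V -> V -> R) : (forall u w, e u w -> 0 < rr u w /\ rr u w = rr w u) ->
  forall c, c != root -> 0 <= rho e rr c.
Proof. by move=> H c Hc; apply: ltW; apply: rho_gt0. Qed.

Lemma PH_mono z u w : betw z u w -> PH P e r x p q z w <= PH P e r x p q u w.
Proof.
move=> Hb; apply: ler_sum => j _.
rewrite !al_sum !be_sum; apply: mono_sum.
- exact: rho_ge0.
- exact: rho_ge0.
- exact: sign_t.
- by move=> c; apply: betw_t.
Qed.

Lemma PH_sym u w : PH P e r x p q u w = PH P e r x p q w u.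
Proof.
apply: eq_bigr => j _.
have -> : al e r w u j = - al e r u w j by rewrite /al opprB.
have -> : be e x w u j = - be e x u w j by rewrite /be opprB.
by rewrite G_neg.
Qed.

Lemma PH_self u : PH P e r x p q u u = 0.
Proof. by rewrite /PH big1 // => j _; rewrite /al /be !subrr /G; ring. Qed.

Lemma betw1 y u w : y \in A u -> y \notin A w -> betw y u w.
Proof.
move=> Hu Hw; apply/andP; split; apply/fintype.subsetP => c.
  by move=> Hc; rewrite inE (A_trans Htree Hc Hu).
rewrite inE => /andP [Hcu Hcw].
case: (A_chain Htree Hcu Hu) => // H.
by move: Hw; rewrite (A_trans Htree H Hcw).
Qed.

Lemma betw2 y u w : y \in A u -> y \notin A w -> y != root -> betw (par e y) w u.
Proof.
move=> Hu Hw Hy; apply/andP; split; apply/fintype.subsetP => c.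
  move=> Hc; rewrite inE (A_trans Htree Hc (A_trans Htree (A_parent Htree Hy) Hu)).
  by rewrite orbT.
rewrite inE => /andP [Hcw Hcu].
case: (A_chain Htree Hcu Hu) => H.
  move: H; rewrite (A_par Htree Hy) !inE => /orP [/eqP Hc|//].
  by move: Hw; rewrite -Hc Hcw.
by move: Hw; rewrite (A_trans Htree H Hcw).
Qed.

Lemma PH_add ci cj b : ci != root -> cj != root -> par e ci = b -> par e cj = b ->
  ci != cj -> PH P e r x p q ci cj = PH P e r x p q ci b + PH P e r x p q b cj.
Proof.
move=> Hi Hj Hpi Hpj Hij; rewrite /PH -big_split; apply: eq_bigr => j _ /=.
have -> : al e r ci cj j = al e r ci b j + al e r b cj j by rewrite /al; ring.
have -> : be e x ci cj j = be e x ci b j + be e x b cj j by rewrite /be; ring.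
have E1 : al e r ci b j = if ci \in A (lift ord0 j) then rho e r ci else 0.
  by rewrite /al /ka -Hpi Kf_par.
have E2 : be e x ci b j = if ci \in A (lift ord0 j) then rho e x ci else 0.
  by rewrite /be /kb -Hpi Kf_par.
have E3 : al e r b cj j = - if cj \in A (lift ord0 j) then rho e r cj else 0.
  by rewrite /al /ka -Hpj -Kf_par // opprB.
have E4 : be e x b cj j = - if cj \in A (lift ord0 j) then rho e x cj else 0.
  by rewrite /be /kb -Hpj -Kf_par // opprB.
rewrite E1 E2 E3 E4.
case Hci : (ci \in A (lift ord0 j)).
  case Hcj : (cj \in A (lift ord0 j)).
    have HD : D e ci = D e cj by rewrite (D_child Htree Hi) (D_child Htree Hj) Hpi Hpj.
    by move: Hij; rewrite (same_depth Htree HD Hci Hcj) eqxx.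
  by rewrite /G; ring.
by rewrite /G; ring.
Qed.

End Mono.

End P6.
Import P6.

Unset Implicit Arguments.
Local Open Scope ring_scope.


Theorem theorem5 (d : measure_display) (Tm : measurableType d) (R : realType)
  (P : probability Tm R) (n : nat)
  (e : rel 'I_n.+1) (r x : 'I_n.+1 -> 'I_n.+1 -> R)
  (p q : 'I_n -> Tm -> R) (v0 : R)
  (M : {set 'I_n.+1}) (TM : rel 'I_n.+1) (a b cstar : 'I_n.+1) :
  (* tree with substation of degree one, positive symmetric line parameters *)
  is_tree_on [set: 'I_n.+1]%SET e ->
  deg e substation = 1%N ->
  (forall u w, e u w -> 0 < r u w /\ 0 < x u w /\ r u w = r w u /\ x u w = x w u) ->
  (* random injections (measurable, finite second moments) *)
  (forall i, p i \in Lfun P 2%:E) ->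
  (forall i, q i \in Lfun P 2%:E) ->
  (* covariance assumption *)
  (forall i j, i != j -> covariance P (p i) (p j) = 0%E) ->
  (forall i j, i != j -> covariance P (q i) (q j) = 0%E) ->
  (forall i j, i != j -> covariance P (q i) (p j) = 0%E) ->
  (forall i, (0 <= covariance P (q i) (p i))%E) ->
  (forall i, (0 < 'V_P[p i] + 'V_P[q i])%E) ->
  (* missing nodes *)
  substation \notin M ->
  (forall m, m \in M -> (2 < deg e m)%N) ->
  (forall m m', m \in M -> m' \in M -> m != m' -> m' \notin hopball e 2 m) ->
  (* T_M is the minimum weight spanning tree on O = V \ M w.r.t. phi *)
  is_MST (~: M) (phi P e r x p q v0) TM ->
  (forall T', is_MST (~: M) (phi P e r x p q v0) T' ->
     T' =2 TM) ->
  let ph := phi P e r x p q v0 in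
  b \in M ->
  is_parent e a b ->
  cstar \in children e b ->
  (forall c, c \in children e b -> (ph b cstar <= ph b c)%E) ->
  (* (i) *)
  (forall ci cj, ci \in children e b :\ cstar -> cj \in children e b :\ cstar ->
     ~~ TM ci cj) /\
  (* (ii) *)
  (forall ci, ci \in children e b -> (ph a ci < ph cstar ci)%E -> TM ci a) /\
  (forall ci, ci \in children e b -> ci != cstar -> ~ (ph a ci < ph cstar ci)%E ->
     TM ci cstar).

Proof.
move=> Htree _ Hrx Hp Hq Hpp Hqq Hqp Hcqp _ _ _ Hdist Hmst Huniq ph HbM Hab Hcs Hmin.
pose w := PH P e r x p q.
have Eph : phi P e r x p q v0 = fun u v => (w u v)%:E.
  by apply/funext => u; apply/funext => v; rewrite (phiE v0 Htree Hrx Hp Hq Hpp Hqq Hqp).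
rewrite /ph in Hmin *; clear ph.
have wsym : forall u v, w u v = w v u by move=> u v; apply: PH_sym.
have w0 : forall u v, 0 <= w u v by move=> u v; apply: (PH_ge0 v0 Htree Hrx Hp Hq Hpp Hqq Hqp).
have Hmst' := Hmst; rewrite Eph in Hmst'.
have [Htm Hmin0] := Hmst'.
have HminW : forall T', is_tree_on (~: M) T' -> W w TM <= W w T'.
  by move=> T' HT; have := Hmin0 T' HT; rewrite !tree_weightE lee_fin.
have HuniqW : forall T', is_tree_on (~: M) T' -> W w T' <= W w TM -> T' =2 TM.
  move=> T' HT Hle; apply: Huniq; rewrite Eph; split => // T'' HT''.
  rewrite !tree_weightE lee_fin; apply: le_trans Hle _; exact: HminW.
have Hr : forall u v, e u v -> 0 < r u v /\ r u v = r v u.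
  by move=> u v H; have [? [? [? ?]]] := Hrx u v H.
have [Hbr Hpb] : b != substation /\ par e b = a.
  by move: Hab; rewrite (is_parentE Htree) => /andP [H1 /eqP H2].
have childE : forall c, c \in children e b -> c != substation /\ par e c = b.
  by move=> c; rewrite (childrenE Htree) => /andP [H1 /eqP H2].
have nbrO : forall y, e b y -> y \in ~: M.
  move=> y Hy; rewrite inE; apply/negP => HyM.
  have Hby : b != y by apply: contraTneq Hy => ->; case: Htree => _ Ti _ _ _; rewrite Ti.
  have := Hdist b y HbM HyM Hby; rewrite /negb.
  have -> : y \in hopball e 2 b by apply/ballE; exists [:: y]; rewrite /= Hy.
  by [].
have [Hba _] := par_spec Htree Hbr.
have HaO : a \in ~: M by apply: nbrO; rewrite -Hpb.
have HcO : forall c, c \in children e b -> c \in ~: M.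
  move=> c /childE [Hc Hpc]; apply: nbrO.
  by have [H _] := par_spec Htree Hc; rewrite -Hpc (e_sym Htree).
have HbMn : b \notin ~: M by rewrite inE negbK.
have [Hcsr Hcsp] := childE _ Hcs.
have Hminw : forall c, c \in children e b -> w b cstar <= w b c.
  by move=> c Hc; have := Hmin c Hc; rewrite Eph lee_fin.
have ch_neqA : forall ci cj, ci \in children e b -> cj \in children e b ->
    ci != cj -> ci \notin A e cj.
  move=> ci cj Hi Hj Hij; apply/negP => H.
  have [Hir Hip] := childE _ Hi; have [Hjr Hjp] := childE _ Hj.
  have HD : D e ci = D e cj by rewrite (D_child Htree Hir) (D_child Htree Hjr) Hip Hjp.
  have [_ H2] := A_D Htree H.
  by move: Hij; rewrite H2 ?eqxx.
have addw : forall ci cj, ci \in children e b -> cj \in children e b -> ci != cj ->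
    w ci cj = w ci b + w b cj.
  move=> ci cj Hi Hj Hij; have [Hir Hip] := childE _ Hi; have [Hjr Hjp] := childE _ Hj.
  exact: (PH_add P r x p q Htree Hir Hjr Hip Hjp Hij).
have viacs : forall ci cj, ci \in children e b -> cj \in children e b -> ci != cj ->
    w ci cstar <= w ci cj.
  move=> ci cj Hi Hj Hij.
  case: (eqVneq cj cstar) => [->//|Hjs].
  case: (eqVneq ci cstar) => [->|His]; first by rewrite /w PH_self; apply: w0.
  rewrite (addw ci cstar) // (addw ci cj) //.
  by rewrite lerD2l; apply: Hminw.
have cross : forall ci u v, ci \in children e b -> ci \in A e u -> ci \notin A e v ->
    v \in ~: M ->
    (b \notin A e v -> w ci a <= w u v) /\
    (b \in A e v -> exists cj, [/\ cj \in children e b, cj != ci & w ci cj <= w u v]).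
  move=> ci u v Hi Hu Hv HvO.
  have [Hir Hip] := childE _ Hi.
  have H1 : w ci v <= w u v.
    by apply: (PH_mono Htree Hrx Hcqp); apply: (betw1 Htree Hu Hv).
  split.
    move=> Hbv; have Hbci : b \in A e ci by rewrite -Hip (A_parent Htree Hir).
    have H2 := PH_mono Htree Hrx Hcqp (betw2 Htree Hbci Hbv Hbr).
    rewrite Hpb in H2; rewrite wsym; apply: le_trans H2 _.
    by rewrite /w PH_sym.
  move=> Hbv; have Hvb : b != v by apply: contraTneq HvO => <-.
  have [cj [Hjr Hjp HjA]] := A_child Htree Hbv Hvb.
  have Hj : cj \in children e b by rewrite (childrenE Htree) Hjr Hjp eqxx.
  have Hji : cj != ci by apply: contraTneq HjA => ->.
  exists cj; split => //.
  have H2 : w cj ci <= w v ci.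
    apply: (PH_mono Htree Hrx Hcqp); apply: (betw1 Htree HjA).
    exact: ch_neqA.
  by rewrite wsym; apply: le_trans H2 _; rewrite wsym.
have Xin : forall ci, ci \in children e b -> ci \in A e ci by move=> ci _; apply: A_self.
have aX : forall ci, ci \in children e b -> ci \notin A e a.
  move=> ci Hi; apply/negP => H; have [L _] := A_D Htree H.
  have [Hir Hip] := childE _ Hi.
  by move: L; rewrite (D_child Htree Hir) Hip (D_child Htree Hbr) Hpb; lia.
split.
- move=> ci cj; rewrite !in_setD1 => /andP [His Hi] /andP [Hjs Hj].
  apply/negP => Tij.
  have [Ts Ti TS _ _] := Htm.
  have Hij : ci != cj by apply: contraTneq Tij => ->; rewrite Ti.
  apply: (mst_tri wsym Htm HuniqW Tij (HcO _ Hcs)).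
  + by rewrite eq_sym.
  + by rewrite eq_sym.
  + exact: viacs Hi Hj Hij.
  + rewrite (addw ci cj) // (addw cstar cj) //; last by rewrite eq_sym.
    by rewrite lerD2r wsym [w ci b]wsym; apply: Hminw.
split.
- move=> ci Hi; rewrite Eph lte_fin => Hlt.
  have Hcis : ci != cstar.
    apply: contraTneq Hlt => ->; rewrite /w PH_self -leNgt; exact: w0.
  apply: (mst_cut wsym Htm HuniqW (X := [pred y | ci \in A e y])) => //=.
  + exact: A_self.
  + exact: aX.
  + exact: HcO.
  + move=> u v HuO HvO Hu Hv.
    have [C1 C2] := cross ci u v Hi Hu Hv HvO.
    case: (boolP (b \in A e v)) => Hbv; last exact: C1.
    have [cj [Hj Hji Hle]] := C2 Hbv.
    apply: le_trans Hle; apply: le_trans (viacs _ _ Hi Hj _); last by rewrite eq_sym.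
    by rewrite wsym [w ci cstar]wsym; apply: ltW.
- move=> ci Hi Hcis Hnlt.
  have Hle0 : w cstar ci <= w a ci.
    by rewrite leNgt; apply/negP => H; apply: Hnlt; rewrite Eph lte_fin.
  apply: (mst_cut wsym Htm HuniqW (X := [pred y | ci \in A e y])) => //=.
  + exact: A_self.
  + exact: ch_neqA.
  + exact: HcO.
  + exact: HcO.
  + move=> u v HuO HvO Hu Hv.
    have [C1 C2] := cross ci u v Hi Hu Hv HvO.
    case: (boolP (b \in A e v)) => Hbv.
      have [cj [Hj Hji Hle]] := C2 Hbv.
      by apply: le_trans Hle; apply: viacs; rewrite // eq_sym.
    apply: le_trans (C1 Hbv).
    by rewrite wsym [w ci a]wsym.
Qed.
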